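(* Let $P,R$ be real constants, and let $\Omega_1,\Omega_3\in\mathbb{R}$. Work in the layer $D=\{(x,y,z):x,y\in\mathbb{R},\ -\tfrac12<z<\tfrac12\}$. Suppose $\mathbf v(x,y,z,t)=(v_x,v_y,v_z)$, $\theta(x,y,z,t)$ and $p(x,y,z,t)$ are smooth and satisfy $$\frac{\partial\mathbf v}{\partial t}=\mathbf v\times(\nabla\times\mathbf v)+P\,\mathbf v\times\boldsymbol\Omega+P\Delta\mathbf v+PR\,\theta\,\mathbf e_z-\nabla p,\qquad \frac{\partial\theta}{\partial t}=-(\mathbf v\cdot\nabla)\theta+v_z+\Delta\theta,\qquad \nabla\cdot\mathbf v=0$$ in $D$ with $\boldsymbol\Omega=(\Omega_1,0,\Omega_3)$, and suppose that $\mathbf v$ and $\theta$ depend only on $x$, $z$ (and $t$), not on $y$. Then for every $\Omega_2\in\mathbb{R}$ there is a modified pressure $\hat p$ such that $(\mathbf v,\theta,\hat p)$ satisfies the same three equations with $\boldsymbol\Omega=(\Omega_1,\Omega_2,\Omega_3)$.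
   Context: $\mathbf e_z=(0,0,1)$; $x,y$ are horizontal and $z$ vertical Cartesian coordinates. These are the dimensionless Boussinesq convection equations in a layer rotating with angular velocity $\boldsymbol\Omega$, with $P$ the Prandtl number and $R$ the Rayleigh number. No boundary conditions are imposed. *)

(* Defs.v *)
From Stdlib Require Import Reals List.
From Coquelicot Require Import Coquelicot.
Open Scope R_scope.

(* A scalar field of (x, y, z, t). *)
Definition field4 := R -> R -> R -> R -> R.

(* Partial derivatives (Coquelicot's total Derive). *)
Definition dx (f : field4) : field4 := fun x y z t => Derive (fun s => f s y z t) x.
Definition dy (f : field4) : field4 := fun x y z t => Derive (fun s => f x s z t) y.
Definition dz (f : field4) : field4 := fun x y z t => Derive (fun s => f x y s t) z.
Definition dt (f : field4) : field4 := fun x y z t => Derive (fun s => f x y z s) t.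

Definition pd (i : nat) (f : field4) : field4 :=
  match i with 0 => dx f | 1 => dy f | 2 => dz f | _ => dt f end.

Definition ex_pd (i : nat) (f : field4) (x y z t : R) : Prop :=
  match i with
  | 0 => ex_derive (fun s => f s y z t) x
  | 1 => ex_derive (fun s => f x s z t) y
  | 2 => ex_derive (fun s => f x y s t) z
  | _ => ex_derive (fun s => f x y z s) t
  end.

Definition iter_pd (l : list nat) (f : field4) : field4 := fold_right pd f l.

Definition cont4 (f : field4) (x y z t : R) : Prop :=
  forall eps : R, 0 < eps -> exists delta : R, 0 < delta /\
    forall x' y' z' t' : R,
      Rabs (x' - x) < delta -> Rabs (y' - y) < delta ->
      Rabs (z' - z) < delta -> Rabs (t' - t) < delta ->
      Rabs (f x' y' z' t' - f x y z t) < eps.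

Definition in_layer (z : R) : Prop := - (1/2) < z < 1/2.

Definition smooth_layer (f : field4) : Prop :=
  forall (l : list nat) (x y z t : R), in_layer z ->
    cont4 (iter_pd l f) x y z t /\
    (forall i : nat, (i < 4)%nat -> ex_pd i (iter_pd l f) x y z t).

Definition lap (f : field4) : field4 :=
  fun x y z t => dx (dx f) x y z t + dy (dy f) x y z t + dz (dz f) x y z t.

(* The rotating Boussinesq equations in D, with v = (vx,vy,vz),
   Omega = (O1,O2,O3), written componentwise:
     dv/dt = v x (curl v) + P v x Omega + P Lap v + P R theta e_z - grad p
     dtheta/dt = -(v . grad) theta + v_z + Lap theta
     div v = 0. *)
Definition boussinesq (P Ra O1 O2 O3 : R) (vx vy vz th p : field4) : Prop :=
  forall x y z t : R, in_layer z ->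
    let wx := dy vz x y z t - dz vy x y z t in
    let wy := dz vx x y z t - dx vz x y z t in
    let wz := dx vy x y z t - dy vx x y z t in
    let ux := vx x y z t in
    let uy := vy x y z t in
    let uz := vz x y z t in
    dt vx x y z t = (uy * wz - uz * wy) + P * (uy * O3 - uz * O2)
                    + P * lap vx x y z t - dx p x y z t /\
    dt vy x y z t = (uz * wx - ux * wz) + P * (uz * O1 - ux * O3)
                    + P * lap vy x y z t - dy p x y z t /\
    dt vz x y z t = (ux * wy - uy * wx) + P * (ux * O2 - uy * O1)
                    + P * lap vz x y z t + P * Ra * th x y z t - dz p x y z t /\
    dt th x y z t = - (ux * dx th x y z t + uy * dy th x y z t + uz * dz th x y z t)
                    + uz + lap th x y z t /\
    dx vx x y z t + dy vy x y z t + dz vz x y z t = 0.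

Definition indep_y (f : field4) : Prop :=
  forall x y y' z t : R, in_layer z -> f x y z t = f x y' z t.

(* Main.v *)
Require Import Defs.
From Stdlib Require Import Reals List Lra Lia.
From Coquelicot Require Import Coquelicot.
Open Scope R_scope.

Lemma loc_of (x:R) (P:R->Prop) (d:R) : 0<d -> (forall y, Rabs(y-x)<d -> P y) -> locally x P.
Proof. intros Hd H. exists (mkposreal d Hd). intros y Hy. apply H. exact Hy. Qed.

Lemma cont_of (f:R->R) x : (forall eps, 0<eps -> exists d, 0<d /\ forall y, Rabs(y-x)<d -> Rabs(f y - f x) < eps) -> continuous f x.
Proof. intros H. apply filterlim_locally. intros eps. destruct (H eps (cond_pos eps)) as [d [Hd Hy]].
  apply (loc_of _ _ d Hd). intros y Hy'. apply Hy. exact Hy'. Qed.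

Lemma layer_nbhd z : in_layer z -> exists d, 0<d /\ forall z', Rabs(z'-z)<d -> in_layer z'.
Proof. unfold in_layer; intros Hz. exists (Rmin (z+1/2) (1/2-z)). split.
 apply Rmin_glb_lt; lra. intros z' H. apply Rabs_def2 in H. destruct H as [H1 H2].
 pose proof (Rmin_l (z+1/2) (1/2-z)). pose proof (Rmin_r (z+1/2) (1/2-z)). lra. Qed.

Lemma layer_between b w : in_layer b -> Rmin 0 b <= w <= Rmax 0 b -> in_layer w.
Proof. unfold in_layer, Rmin, Rmax. intros Hb Hw. destruct (Rle_dec 0 b); lra. Qed.

Lemma cont_x f y z t x : smooth_layer f -> in_layer z -> continuous (fun s => f s y z t) x.
Proof. intros Hf Hz. apply cont_of. intros eps He.
 destruct (proj1 (Hf nil x y z t Hz) eps He) as [d [Hd H]]. exists d. split; auto.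
 intros s Hs. apply H; auto; rewrite Rminus_eq_0, Rabs_R0; auto. Qed.

Lemma cont_z f x y t z : smooth_layer f -> in_layer z -> continuous (fun s => f x y s t) z.
Proof. intros Hf Hz. apply cont_of. intros eps He.
 destruct (proj1 (Hf nil x y z t Hz) eps He) as [d [Hd H]]. exists d. split; auto.
 intros s Hs. apply H; auto; rewrite Rminus_eq_0, Rabs_R0; auto. Qed.

Lemma cont_dx f y z t x : smooth_layer f -> in_layer z -> continuous (fun s => dx f s y z t) x.
Proof. intros Hf Hz. apply cont_of. intros eps He.
 destruct (proj1 (Hf (0%nat::nil) x y z t Hz) eps He) as [d [Hd H]]. exists d. split; auto.
 intros s Hs. apply H; auto; rewrite Rminus_eq_0, Rabs_R0; auto. Qed.

Lemma c2d_dz f t z s : smooth_layer f -> in_layer z ->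
  continuity_2d_pt (fun u v => Derive (fun w => f v 0 w t) u) z s.
Proof. intros Hf Hz eps.
 destruct (proj1 (Hf (2%nat::nil) s 0 z t Hz) eps (cond_pos eps)) as [d [Hd H]].
 exists (mkposreal d Hd). intros u v Hu Hv. apply (H v 0 u t); auto; rewrite Rminus_eq_0, Rabs_R0; auto. Qed.

Lemma dy_indep f x y z t : indep_y f -> in_layer z -> dy f x y z t = 0.
Proof. intros H Hz. unfold dy. rewrite (Derive_ext _ (fun _ => f x y z t)).
 apply Derive_const. intros s. apply H; auto. Qed.

Definition Phi (vx vz : field4) (x z t : R) : R :=
  RInt (fun s => vx 0 0 s t) 0 z - RInt (fun s => vz s 0 z t) 0 x.

Lemma Phi_dx vx vz x z t : smooth_layer vz -> in_layer z ->
  is_derive (fun s => Phi vx vz s z t) x (- vz x 0 z t).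
Proof. intros Hz Hl. unfold Phi.
 replace (- vz x 0 z t) with (0 - vz x 0 z t) by ring.
 apply (is_derive_minus (fun _ => RInt (fun s => vx 0 0 s t) 0 z) (fun s => RInt (fun s0 => vz s0 0 z t) 0 s)).
 exact (is_derive_const (K:=R_AbsRing) (V:=R_NormedModule) (RInt (fun s => vx 0 0 s t) 0 z) x).
 apply (is_derive_RInt (fun s0 => vz s0 0 z t) (RInt (fun s0 => vz s0 0 z t) 0) 0 x).
 apply (loc_of _ _ 1). lra. intros b _. apply (RInt_correct (V:=R_CompleteNormedModule)). apply (ex_RInt_continuous (V:=R_CompleteNormedModule)).
 intros w _. apply cont_x; auto.
 apply cont_x; auto. Qed.

Lemma Phi_dz vx vz x z t : smooth_layer vx -> smooth_layer vz -> in_layer z ->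
  (forall s z t, in_layer z -> dx vx s 0 z t + dz vz s 0 z t = 0) ->
  is_derive (fun u => Phi vx vz x u t) z (vx x 0 z t).
Proof. intros Hx Hz Hl Hdiv. unfold Phi.
 destruct (layer_nbhd z Hl) as [d [Hd Hn]].
 assert (E: RInt (fun s => Derive (fun u => vz s 0 u t) z) 0 x = vx 0 0 z t - vx x 0 z t).
 { transitivity (RInt (fun s => - Derive (fun u => vx u 0 z t) s) 0 x).
   apply RInt_ext. intros w _. specialize (Hdiv w z t Hl). unfold dx, dz in Hdiv. lra.
   transitivity (- RInt (Derive (fun u => vx u 0 z t)) 0 x).
   exact (RInt_opp (V:=R_CompleteNormedModule) (Derive (fun u => vx u 0 z t)) 0 x
     (ex_RInt_continuous (V:=R_CompleteNormedModule) _ _ _ (fun w _ => cont_dx vx 0 z t w Hx Hl))).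
   rewrite RInt_Derive. simpl. lra.
   intros w _. exact (proj2 (Hx nil w 0 z t Hl) 0%nat ltac:(lia)).
   intros w _. exact (cont_dx vx 0 z t w Hx Hl). }
 replace (vx x 0 z t) with (vx 0 0 z t - RInt (fun s => Derive (fun u => vz s 0 u t) z) 0 x) by (rewrite E; ring).
 apply (is_derive_minus (fun u => RInt (fun s => vx 0 0 s t) 0 u) (fun u => RInt (fun s => vz s 0 u t) 0 x)).
 - apply (is_derive_RInt (fun s => vx 0 0 s t) (RInt (fun s => vx 0 0 s t) 0) 0 z).
   apply (loc_of _ _ d Hd). intros b Hb. apply (RInt_correct (V:=R_CompleteNormedModule)).
   apply (ex_RInt_continuous (V:=R_CompleteNormedModule)). intros w Hw.
   apply cont_z; auto. apply (layer_between b); auto.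
   apply cont_z; auto.
 - apply (is_derive_RInt_param (fun u s => vz s 0 u t) 0 x z).
   + apply (loc_of _ _ d Hd). intros u Hu s _. exact (proj2 (Hz nil s 0 u t (Hn u Hu)) 2%nat ltac:(lia)).
   + intros s _. apply c2d_dz; auto.
   + apply (loc_of _ _ d Hd). intros u Hu. apply (ex_RInt_continuous (V:=R_CompleteNormedModule)).
     intros w _. apply cont_x; auto.
Qed.

Definition phat (P O2 : R) (p vx vz : field4) : field4 :=
  fun x y z t => p x y z t + P * O2 * Phi vx vz x z t.

Section Main.
Variables (P O2 : R) (p vx vz : field4).
Hypotheses (Hp : smooth_layer p) (Hx : smooth_layer vx) (Hz : smooth_layer vz)
  (Hdiv : forall s z t, in_layer z -> dx vx s 0 z t + dz vz s 0 z t = 0).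

Lemma phat_dx x y z t : in_layer z ->
  is_derive (fun s => phat P O2 p vx vz s y z t) x (dx p x y z t + P*O2*(- vz x 0 z t)).
Proof. intros Hl. unfold phat.
 apply (is_derive_plus (K:=R_AbsRing) (V:=R_NormedModule) (fun s => p s y z t) (fun s => P*O2*Phi vx vz s z t)).
 apply Derive_correct. exact (proj2 (Hp nil x y z t Hl) 0%nat ltac:(lia)).
 apply is_derive_scal. apply Phi_dx; auto. Qed.

Lemma phat_dy x y z t : in_layer z ->
  is_derive (fun s => phat P O2 p vx vz x s z t) y (dy p x y z t + P*O2*0).
Proof. intros Hl. unfold phat.
 apply (is_derive_plus (K:=R_AbsRing) (V:=R_NormedModule) (fun s => p x s z t) (fun s => P*O2*Phi vx vz x z t)).
 apply Derive_correct. exact (proj2 (Hp nil x y z t Hl) 1%nat ltac:(lia)).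
 apply is_derive_scal. exact (is_derive_const (K:=R_AbsRing) (V:=R_NormedModule) (Phi vx vz x z t) y). Qed.

Lemma phat_dz x y z t : in_layer z ->
  is_derive (fun s => phat P O2 p vx vz x y s t) z (dz p x y z t + P*O2*(vx x 0 z t)).
Proof. intros Hl. unfold phat.
 apply (is_derive_plus (K:=R_AbsRing) (V:=R_NormedModule) (fun s => p x y s t) (fun s => P*O2*Phi vx vz x s t)).
 apply Derive_correct. exact (proj2 (Hp nil x y z t Hl) 2%nat ltac:(lia)).
 apply is_derive_scal. apply Phi_dz; auto. Qed.
End Main.

Theorem theorem1 (P Ra O1 O3 : R) (vx vy vz th p : field4) :
  smooth_layer vx -> smooth_layer vy -> smooth_layer vz ->
  smooth_layer th -> smooth_layer p ->
  boussinesq P Ra O1 0 O3 vx vy vz th p ->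
  indep_y vx -> indep_y vy -> indep_y vz -> indep_y th ->
  forall O2 : R, exists phat : field4,
    (forall x y z t : R, in_layer z ->
       ex_pd 0 phat x y z t /\ ex_pd 1 phat x y z t /\ ex_pd 2 phat x y z t) /\
    boussinesq P Ra O1 O2 O3 vx vy vz th phat.
Proof.
 intros Hx Hy Hz Ht Hp Hb Ix Iy Iz It O2.
 assert (Hdiv : forall s z t, in_layer z -> dx vx s 0 z t + dz vz s 0 z t = 0).
 { intros s z t Hl. destruct (Hb s 0 z t Hl) as [_ [_ [_ [_ E5]]]].
   rewrite (dy_indep vy s 0 z t Iy Hl) in E5. lra. }
 exists (phat P O2 p vx vz). split.
 - intros x y z t Hl. repeat split.
   + eexists. apply phat_dx; auto.
   + eexists. apply phat_dy; auto.
   + eexists. apply phat_dz; auto.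
 - intros x y z t Hl.
   pose proof (Hb x y z t Hl) as E. cbv zeta in E |- *.
   destruct E as [E1 [E2 [E3 [E4 E5]]]].
   assert (Dx : dx (phat P O2 p vx vz) x y z t = dx p x y z t + P*O2*(- vz x 0 z t))
     by (apply is_derive_unique; apply phat_dx; auto).
   assert (Dy : dy (phat P O2 p vx vz) x y z t = dy p x y z t + P*O2*0)
     by (apply is_derive_unique; apply phat_dy; auto).
   assert (Dz : dz (phat P O2 p vx vz) x y z t = dz p x y z t + P*O2*(vx x 0 z t))
     by (apply is_derive_unique; apply phat_dz; auto).
   rewrite Dx, Dy, Dz.
   rewrite (Iz x 0 y z t Hl), (Ix x 0 y z t Hl).
   rewrite E1, E2, E3, E4. repeat split; try ring. exact E5.
Qed.
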